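(* Let $n\ge 4$. For every extreme point $\bar x$ of $P^n$ with all coordinates in $\{0,\tfrac12,1\}$ there exist $y^1,y^2\in\mathcal C^n$ such that $\bar x=\tfrac12 y^1+\tfrac12 y^2$.
   Context: Let $V=\{0,\dots,n-1\}$ and $E=\{(u,v)\in V\times V:u\neq v\}$ be the arc set of the complete digraph, with arcs written $uv$. For $w\in V$ let $\delta^+(w)$ and $\delta^-(w)$ denote the sets of arcs leaving and entering $w$. For $S\subseteq V$ let $\delta^+(S)=\{uv\in E:u\in S,\ v\notin S\}$, and let $\mathcal S=\{S\subset V:2\le|S|\le n-2\}$. For $x\in\mathbb R^E$ and $F\subseteq E$ write $x(F)=\sum_{e\in F}x_e$. The asymmetric subtour elimination polytope is $$P^n=\{x\in\mathbb R^E:\ x(\delta^+(w))=1 \text{ and } x(\delta^-(w))=1\ \forall w\in V,\ \ x(\delta^+(S))\ge 1\ \forall S\in\mathcal S,\ \ x\ge 0\}.$$ Let $\mathcal C^n=\{y\in\{0,1\}^E:\ y(\delta^+(w))=y(\delta^-(w))=1\ \forall w\in V\}$. These are the characteristic vectors of cycle covers, i.e. of spanning collections of vertex-disjoint directed cycles, each of length at least $2$, covering $V$. *)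

(* Defs.v *)
From HB Require Import structures.
From mathcomp Require Import all_boot all_order all_algebra.
From mathcomp Require Import reals.
Set Implicit Arguments. Unset Strict Implicit. Unset Printing Implicit Defensive.
Import Order.TTheory GRing.Theory Num.Theory.
Local Open Scope ring_scope.

Definition darc (n : nat) := {e : 'I_n * 'I_n | e.1 != e.2}.

Section Defs.
Variables (R : realType) (n : nat).

Definition tail (e : darc n) : 'I_n := (val e).1.
Definition head (e : darc n) : 'I_n := (val e).2.

Definition xsum (x : darc n -> R) (F : {set darc n}) : R := \sum_(e in F) x e.

Definition delta_out (w : 'I_n) : {set darc n} := [set e | tail e == w].
Definition delta_in (w : 'I_n) : {set darc n} := [set e | head e == w].
Definition delta_outS (S : {set 'I_n}) : {set darc n} :=
  [set e | (tail e \in S) && (head e \notin S)].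

Definition in_ASEP (x : darc n -> R) : Prop :=
  (forall w : 'I_n, xsum x (delta_out w) = 1 /\ xsum x (delta_in w) = 1) /\
  (forall S : {set 'I_n}, (2 <= #|S|)%N -> (#|S| <= n - 2)%N ->
      1 <= xsum x (delta_outS S)) /\
  (forall e, 0 <= x e).

Definition extreme_ASEP (x : darc n -> R) : Prop :=
  in_ASEP x /\
  forall (y z : darc n -> R) (lam : R), in_ASEP y -> in_ASEP z ->
    0 < lam -> lam < 1 -> (forall e, x e = lam * y e + (1 - lam) * z e) ->
    forall e, y e = z e.

Definition in_Cn (y : darc n -> R) : Prop :=
  (forall e, y e = 0 \/ y e = 1) /\
  (forall w : 'I_n, xsum y (delta_out w) = 1 /\ xsum y (delta_in w) = 1).

End Defs.

(* Main.v *)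
From Pilot Require Import Defs.
From HB Require Import structures.
From mathcomp Require Import all_boot all_order all_algebra.
From mathcomp Require Import reals zify.
Set Implicit Arguments. Unset Strict Implicit. Unset Printing Implicit Defensive.
Section Key.
Variable T : finType.
Definition rs (M : T -> T -> nat) i := \sum_j M i j.
Definition cs (M : T -> T -> nat) j := \sum_i M i j.
Definition E (p q : T) i j : nat := (i == p) && (j == q).

Lemma rsE p q i : rs (E p q) i = (i == p).
Proof.
rewrite /rs (bigD1 q) //= big1 => [|j /negbTE hj]; last by rewrite /E hj andbF.
by rewrite /E eqxx andbT addn0.
Qed.
Lemma csE p q j : cs (E p q) j = (j == q).
Proof.
rewrite /cs (bigD1 p) //= big1 => [|i /negbTE hi]; last by rewrite /E hi.
by rewrite /E eqxx addn0.
Qed.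
Lemma rsD M N i : rs (fun a b => M a b + N a b) i = rs M i + rs N i.
Proof. by rewrite /rs big_split. Qed.
Lemma csD M N i : cs (fun a b => M a b + N a b) i = cs M i + cs N i.
Proof. by rewrite /cs big_split. Qed.
Lemma rs_ext M N i : (forall a b, M a b = N a b) -> rs M i = rs N i.
Proof. by move=> h; apply: eq_bigr => j _; apply: h. Qed.
Lemma cs_ext M N i : (forall a b, M a b = N a b) -> cs M i = cs N i.
Proof. by move=> h; apply: eq_bigr => j _; apply: h. Qed.
Lemma entry_le M i j : M i j <= rs M i.
Proof. by rewrite /rs (bigD1 j) //= leq_addr. Qed.
Lemma entry_lec M i j : M i j <= cs M j.
Proof. by rewrite /cs (bigD1 i) //= leq_addr. Qed.
Definition tot M := \sum_i rs M i.
Lemma totD M N : tot (fun a b => M a b + N a b) = tot M + tot N.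
Proof. by rewrite /tot -big_split; apply: eq_bigr => i _; rewrite rsD. Qed.
Lemma tot_ext M N : (forall a b, M a b = N a b) -> tot M = tot N.
Proof. by move=> h; apply: eq_bigr => i _; apply: rs_ext. Qed.
Lemma totE p q : tot (E p q) = 1.
Proof.
rewrite /tot (eq_bigr _ (fun i _ => rsE p q i)) (bigD1 p) //= eqxx big1 // => i /negbTE -> //.
Qed.
Lemma two_le M i j1 j2 : j1 != j2 -> M i j1 + M i j2 <= rs M i.
Proof.
move=> h; rewrite /rs (bigD1 j1) //= (bigD1 j2) /=; last by rewrite eq_sym.
by rewrite addnA leq_addr.
Qed.
Lemma two_lec M j i1 i2 : i1 != i2 -> M i1 j + M i2 j <= cs M j.
Proof.
move=> h; rewrite /cs (bigD1 i1) //= (bigD1 i2) /=; last by rewrite eq_sym.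
by rewrite addnA leq_addr.
Qed.
Lemma zero_case M : (forall a b, M a b = 0) ->
  exists P : T -> T -> nat, (forall i j, P i j <= M i j) /\
   (forall i, rs M i = 2 * rs P i) /\ (forall j, cs M j = 2 * cs P j).
Proof.
move=> h; exists M; split=> // ; split=> i.
  by rewrite /rs big1 // => j _; rewrite h.
by rewrite /cs big1 // => j _; rewrite h.
Qed.

Lemma key N : forall M : T -> T -> nat, tot M <= N ->
  (forall i, rs M i = 0 \/ rs M i = 2) -> (forall j, cs M j = 0 \/ cs M j = 2) ->
  exists P : T -> T -> nat, (forall i j, P i j <= M i j) /\
   (forall i, rs M i = 2 * rs P i) /\ (forall j, cs M j = 2 * cs P j).
Proof.
elim: N => [|N IH] M htot hr hc.
  apply: zero_case => a b.
  have := entry_le M a b; have : rs M a <= tot M by rewrite /tot (bigD1 a) //= leq_addr.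
  lia.
case: (pickP (fun p : T * T => 0 < M p.1 p.2)) => [[a b] /= pos|h0]; last first.
  by apply: zero_case => a b; move: (h0 (a, b)) => /= /negbT; rewrite lt0n negbK => /eqP.
have ra : rs M a = 2 by case: (hr a) (entry_le M a b) => ->; lia.
have cb : cs M b = 2 by case: (hc b) (entry_lec M a b) => ->; lia.
have hab := entry_le M a b.
have [two|one] : M a b = 2 \/ M a b = 1 by lia.
- pose M' := fun i j => M i j - 2 * E a b i j.
  have id : forall i j, M' i j + E a b i j + E a b i j = M i j.
    move=> i j; rewrite /M' /E; case ia: (i == a); case jb: (j == b) => //=;
      rewrite ?(eqP ia) ?(eqP jb); lia.
  have hrs i : rs M' i + (i == a) + (i == a) = rs M i.
    by rewrite -(rsE a b i) -!rsD; apply: rs_ext.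
  have hcs j : cs M' j + (j == b) + (j == b) = cs M j.
    by rewrite -(csE a b j) -!csD; apply: cs_ext.
  have htot' : tot M' + 2 = tot M.
    by rewrite -(tot_ext id) !totD totE -addnA.
  have [P' [le' [r' c']]] : exists P' : T -> T -> nat, (forall i j, P' i j <= M' i j) /\
   (forall i, rs M' i = 2 * rs P' i) /\ (forall j, cs M' j = 2 * cs P' j).
    apply: IH; first lia.
    - move=> i; have := hrs i; case ia: (i == a); first by rewrite (eqP ia) ra; lia.
      by case: (hr i); lia.
    - move=> j; have := hcs j; case jb: (j == b); first by rewrite (eqP jb) cb; lia.
      by case: (hc j); lia.
  exists (fun i j => P' i j + E a b i j); split; [|split].
  + move=> i j; have := id i j; have := le' i j; rewrite /E.
    case ia: (i == a); case jb: (j == b) => //=; try lia.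
  + by move=> i; rewrite (rsD P' (E a b)) rsE -hrs r'; lia.
  + by move=> j; rewrite (csD P' (E a b)) csE -hcs c'; lia.
- have [b' /andP[hb' pb']|h0] := pickP (fun j => (j != b) && (0 < M a j)); last first.
    have : rs M a = M a b.
      rewrite /rs (bigD1 b) //= big1 ?addn0 // => j hj.
      by move: (h0 j); rewrite hj /= lt0n => /negbT; rewrite negbK => /eqP.
    lia.
  have [a' /andP[ha' pa']|h0] := pickP (fun i => (i != a) && (0 < M i b)); last first.
    have : cs M b = M a b.
      rewrite /cs (bigD1 a) //= big1 ?addn0 // => i hi.
      by move: (h0 i); rewrite hi /= lt0n => /negbT; rewrite negbK => /eqP.
    lia.
  have hab' : M a b' = 1 by have := two_le M a hb'; lia.
  have ha'b : M a' b = 1 by have := two_lec M b ha'; lia.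
  have ra' : rs M a' = 2 by case: (hr a') (entry_le M a' b) => ->; lia.
  have cb' : cs M b' = 2 by case: (hc b') (entry_lec M a b') => ->; lia.
  pose M' := fun i j => M i j + E a' b' i j - E a b i j - E a b' i j - E a' b i j.
  have id : forall i j, M' i j + E a b i j + E a b' i j + E a' b i j = M i j + E a' b' i j.
    move=> i j; rewrite /M' /E.
    case ia: (i == a); case ia': (i == a'); case jb: (j == b); case jb': (j == b') => //=;
     try (by rewrite (eqP ia) eq_sym (negbTE ha') in ia');
     try (by rewrite (eqP jb) eq_sym (negbTE hb') in jb');
     rewrite ?(eqP ia) ?(eqP ia') ?(eqP jb) ?(eqP jb'); lia.
  have hrs i : rs M' i + (i == a) + (i == a) + (i == a') = rs M i + (i == a').
    rewrite -{1}(rsE a b i) -(rsE a b' i) -{1}(rsE a' b i) -(rsE a' b' i) -!rsD.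
    by apply: rs_ext.
  have hcs j : cs M' j + (j == b) + (j == b') + (j == b) = cs M j + (j == b').
    rewrite -{1}(csE a b j) -{1}(csE a b' j) -(csE a' b j) -(csE a' b' j) -!csD.
    by apply: cs_ext.
  have htot' : tot M' + 3 = tot M + 1.
    by rewrite -(totE a' b') -totD -(tot_ext id) !totD !totE -!addnA.
  have naa' : (a == a') = false by apply/negbTE; rewrite eq_sym.
  have nbb' : (b == b') = false by apply/negbTE; rewrite eq_sym.
  have [P' [le' [r' c']]] : exists P' : T -> T -> nat, (forall i j, P' i j <= M' i j) /\
   (forall i, rs M' i = 2 * rs P' i) /\ (forall j, cs M' j = 2 * cs P' j).
    apply: IH; first lia.
    - move=> i; have := hrs i; case ia: (i == a).
        by rewrite (eqP ia) ra naa'; lia.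
      by case: (hr i); lia.
    - move=> j; have := hcs j; case jb: (j == b).
        by rewrite (eqP jb) cb nbb'; lia.
      by case: (hc j); lia.
  have [p0|ppos] := posnP (P' a' b').
  + exists (fun i j => P' i j + E a b i j); split; [|split].
    * move=> i j; have := id i j; have := le' i j.
      case e: ((i == a') && (j == b')).
        case/andP: e => /eqP -> /eqP ->; rewrite p0 /E eq_sym naa' /=; lia.
      have -> : E a' b' i j = 0 by rewrite /E e.
      lia.
    * by move=> i; rewrite (rsD P' (E a b)) rsE; have := hrs i; have := r' i; lia.
    * by move=> j; rewrite (csD P' (E a b)) csE; have := hcs j; have := c' j; lia.
  + pose P := fun i j => P' i j + E a' b i j + E a b' i j - E a' b' i j.
    have idP : forall i j, P i j + E a' b' i j = P' i j + E a' b i j + E a b' i j.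
      move=> i j; rewrite /P /E.
      case ia': (i == a'); case jb': (j == b') => //=; rewrite ?addn0 ?subn0 //.
      rewrite (eqP ia') (eqP jb'); lia.
    have hrP i : rs P i + (i == a') = rs P' i + (i == a') + (i == a).
      rewrite -{1}(rsE a' b' i) -(rsE a' b i) -(rsE a b' i) -!rsD.
      by apply: rs_ext.
    have hcP j : cs P j + (j == b') = cs P' j + (j == b) + (j == b').
      rewrite -{1}(csE a' b' j) -(csE a' b j) -(csE a b' j) -!csD.
      by apply: cs_ext.
    exists P; split; [|split].
    * move=> i j; have := id i j; have := le' i j; have := idP i j.
      have : E a b i j <= 1 by rewrite /E; case: (_ && _).
      lia.
    * by move=> i; have := hrs i; have := r' i; have := hrP i; lia.
    * by move=> j; have := hcs j; have := c' j; have := hcP j; lia.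
Qed.
End Key.
Import Order.TTheory GRing.Theory Num.Theory.
Import Pilot.Defs.
Local Open Scope ring_scope.

Lemma sub_sum (R : realType) n (Q : pred ('I_n * 'I_n)) (G : 'I_n * 'I_n -> R) :
  \sum_(e : darc n | Q (val e)) G (val e) =
  \sum_(p : 'I_n * 'I_n | (p.1 != p.2) && Q p) G p.
Proof.
rewrite (reindex_omap (val : darc n -> 'I_n * 'I_n) insub); last first.
  by move=> p /andP[h _]; rewrite insubT.
by apply: eq_bigl => e; rewrite valK eqxx andbT (valP e).
Qed.

Lemma xsum_out (R : realType) n (Q : 'I_n -> 'I_n -> nat) w :
  (forall i, Q i i = 0%N) ->
  xsum (fun e => (Q (tail e) (head e))%:R : R) (delta_out w) = (rs Q w)%:R.
Proof.
move=> hQ; rewrite /xsum /rs natr_sum.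
transitivity (\sum_(e : darc n | (fun p : 'I_n * 'I_n => p.1 == w) (val e))
   (fun p : 'I_n * 'I_n => (Q p.1 p.2)%:R : R) (val e)).
  by apply: eq_bigl => e; rewrite inE.
rewrite (sub_sum (fun p : 'I_n * 'I_n => p.1 == w) (fun p => (Q p.1 p.2)%:R : R)).
have -> : \sum_j (Q w j)%:R = \sum_(j | j != w) (Q w j)%:R :> R by rewrite (bigD1 w) //= hQ mulr0n add0r.
have -> : \sum_(j | j != w) (Q w j)%:R = \sum_(i | i == w) \sum_(j | j != w) (Q i j)%:R :> R by rewrite big_pred1_eq.
rewrite pair_big_dep; apply: eq_bigl => -[i j] /=.
by case: (i =P w) => [->|]; rewrite ?andbF // andbT eq_sym.
Qed.

Lemma xsum_in (R : realType) n (Q : 'I_n -> 'I_n -> nat) w :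
  (forall i, Q i i = 0%N) ->
  xsum (fun e => (Q (tail e) (head e))%:R : R) (delta_in w) = (cs Q w)%:R.
Proof.
move=> hQ; rewrite /xsum /cs natr_sum.
transitivity (\sum_(e : darc n | (fun p : 'I_n * 'I_n => p.2 == w) (val e))
   (fun p : 'I_n * 'I_n => (Q p.1 p.2)%:R : R) (val e)).
  by apply: eq_bigl => e; rewrite inE.
rewrite (sub_sum (fun p : 'I_n * 'I_n => p.2 == w) (fun p => (Q p.1 p.2)%:R : R)).
have -> : \sum_i (Q i w)%:R = \sum_(i | i != w) (Q i w)%:R :> R by rewrite (bigD1 w) //= hQ mulr0n add0r.
rewrite (eq_bigr (fun i => \sum_(j | j == w) (Q i j)%:R)); last first.
  by move=> i _; rewrite big_pred1_eq.
rewrite pair_big_dep; apply: eq_bigl => -[i j] /=.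
by case: (j =P w) => [->|]; rewrite ?andbF // andbT.
Qed.

Theorem mainTheorem2 (R : realType) (n : nat) (x : darc n -> R) :
  (4 <= n)%N ->
  extreme_ASEP x ->
  (forall e, x e = 0 \/ x e = 2^-1 \/ x e = 1) ->
  exists y1 y2 : darc n -> R,
    in_Cn y1 /\ in_Cn y2 /\ forall e, x e = 2^-1 * y1 e + 2^-1 * y2 e.
Proof.
move=> _ [[hdeg _] _] hx.
pose k e : nat := if x e == 1 then 2%N else if x e == 2^-1 then 1%N else 0%N.
have n01 : ((0 : R) == 1) = false by apply/negbTE; rewrite eq_sym oner_eq0.
have n0h : ((0 : R) == 2^-1) = false by apply/negbTE; rewrite eq_sym invr_eq0 pnatr_eq0.
have nh1 : ((2^-1 : R) == 1) = false.
  apply/negbTE; rewrite -[X in _ != X]invr1 (inj_eq (@invr_inj _)); by rewrite pnatr_eq1.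
have hk e : x e = (k e)%:R * 2^-1.
  rewrite /k; case: (hx e) => [->|[->|->]].
    by rewrite n01 n0h mul0r.
    by rewrite nh1 eqxx mul1r.
  by rewrite eqxx mulfV // pnatr_eq0.
pose M (i j : 'I_n) : nat := oapp k 0%N (insub (i, j)).
have Mdiag i : M i i = 0%N by rewrite /M insubF //= eqxx.
have Me e : M (tail e) (head e) = k e.
  rewrite /M; have -> : (tail e, head e) = val e by case: e => -[].
  by rewrite valK.
have xE e : x e = (M (tail e) (head e))%:R * 2^-1 by rewrite Me hk.
have hrM w : rs M w = 2%N.
  have : (rs M w)%:R * 2^-1 = 1 :> R.
    rewrite -[RHS](proj1 (hdeg w)) -(xsum_out R w Mdiag) /xsum mulr_suml.
    by apply: eq_bigr => e _; rewrite xE.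
  move/(congr1 (fun t => t * 2)); rewrite -mulrA mulVf ?pnatr_eq0 // mulr1 mul1r.
  by move/eqP; rewrite eqr_nat => /eqP.
have hcM w : cs M w = 2%N.
  have : (cs M w)%:R * 2^-1 = 1 :> R.
    rewrite -[RHS](proj2 (hdeg w)) -(xsum_in R w Mdiag) /xsum mulr_suml.
    by apply: eq_bigr => e _; rewrite xE.
  move/(congr1 (fun t => t * 2)); rewrite -mulrA mulVf ?pnatr_eq0 // mulr1 mul1r.
  by move/eqP; rewrite eqr_nat => /eqP.
have [P [leP [rP cP]]] := @key _ (tot M) M (leqnn _) (fun i => or_intror (hrM i))
   (fun j => or_intror (hcM j)).
have Pdiag i : P i i = 0%N by apply/eqP; rewrite -leqn0 -(Mdiag i) leP.
pose Q i j := (M i j - P i j)%N.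
have Qdiag i : Q i i = 0%N by rewrite /Q Mdiag.
have hMQ i j : M i j = (Q i j + P i j)%N by rewrite /Q subnK.
have rP1 w : rs P w = 1%N by have := rP w; rewrite hrM; lia.
have cP1 w : cs P w = 1%N by have := cP w; rewrite hcM; lia.
have rQ1 w : rs Q w = 1%N.
  by have := rP1 w; have := hrM w; rewrite (rs_ext _ hMQ) (rsD Q P); lia.
have cQ1 w : cs Q w = 1%N.
  by have := cP1 w; have := hcM w; rewrite (cs_ext _ hMQ) (csD Q P); lia.
exists (fun e => (P (tail e) (head e))%:R), (fun e => (Q (tail e) (head e))%:R).
split; [|split].
- split.
  + move=> e; have := entry_le P (tail e) (head e); rewrite rP1.
    by case: (P _ _) => [|[|]] //; [left|right].
  + by move=> w; rewrite xsum_out // xsum_in // rP1 cP1.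
- split.
  + move=> e; have := entry_le Q (tail e) (head e); rewrite rQ1.
    by case: (Q _ _) => [|[|]] //; [left|right].
  + by move=> w; rewrite xsum_out // xsum_in // rQ1 cQ1.
- by move=> e; rewrite xE hMQ natrD mulrDl addrC; congr (_ + _); rewrite mulrC.
Qed.
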